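(* Let $H \subset L$ be light-cone regular and assume that the equation $f_h = \Phi(f_{h+v_1},\ldots,f_{h+v_N})$ has the Laurent property, the irreducibility and the coprimeness on $H$. Then it also has these three properties when considered over the coefficient field $K$: for every $h \in H \setminus H_0$, $f_h$ is an irreducible element of $K_{H_0}$, and for every pair $h_1, h_2 \in H$ with $h_1 \neq h_2$, $f_{h_1}$ and $f_{h_2}$ are coprime in $K_{H_0}$.
   Context: Let $R$ be a unique factorization domain with field of fractions $K$. Let $L$ be a finitely generated $\mathbb{Z}$-module (possibly with torsion). Fix distinct $v_1,\dots,v_N\in L$ which generate $L$ and are linearly independent over $\mathbb{Z}_{\ge 0}$ (i.e. $\sum_i a_i v_i=0$ with all $a_i\in\mathbb{Z}_{\ge0}$ forces all $a_i=0$), and an irreducible Laurent polynomial $\Phi\in R[Y_1^{\pm1},\dots,Y_N^{\pm1}]$ which is not a Laurent monomial and depends on every variable. Consider the equation $f_h=\Phi(f_{h+v_1},\dots,f_{h+v_N})$ ($h\in L$). Let $S=\{\sum_i a_iv_i : a_i\in\mathbb{Z}_{\ge0}\}$ and $h_1\le h_2$ iff $h_1-h_2\in S$. Assume $v_N$ is the minimum of $\{0,v_1,\dots,v_N\}$ for $\le$ and the equation can be solved as $f_{h+v_N}=\Psi(f_{h+v_1},\dots,f_{h+v_{N-1}},f_h)$ with $\Psi$ an irreducible Laurent polynomial over $R$. A nonempty $H\subset L$ is light-cone regular if for every $h\in H$ the set $\{h'\in H: h'\le h\}$ is finite and $\{h'\in L: h'\ge h\}\subset H$; its initial boundary is $H_0=\{h\in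 H:\ h+v_i\notin H\text{ for some }i\}$. The $f_{h}$ ($h\in H_0$) are algebraically independent indeterminates over $K$, and for $h\in H\setminus H_0$, $f_h$ is defined recursively by the equation in $K(f_{h_0}: h_0\in H_0)$. For $T\subset L$, $R_T=R[f_h^{\pm1}: h\in T]$, $K_T=K[f_h^{\pm1}: h\in T]$. Laurent property on $H$: $f_h\in R_{H_0}$ for all $h\in H$; irreducibility: every $f_h$ ($h\in H$) is irreducible in $R_{H_0}$ (units count as irreducible); coprimeness: $f_{h_1},f_{h_2}$ coprime in $R_{H_0}$ for all $h_1\neq h_2$ in $H$. *)

(* Defs.v *)
From HB Require Import structures.
From mathcomp Require Import all_boot all_order all_algebra.
From mathcomp Require Import fraction.
From mathcomp Require Import mpoly.

Set Implicit Arguments.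
Unset Strict Implicit.
Unset Printing Implicit Defensive.

Import Order.TTheory GRing.Theory Num.Theory.
Local Open Scope ring_scope.

Definition ufd_irreducible (R : idomainType) (a : R) : Prop :=
  [/\ a != 0, a \isn't a GRing.unit &
      forall b c : R, a = b * c -> b \is a GRing.unit \/ c \is a GRing.unit].

Definition associated (R : idomainType) (a b : R) : Prop :=
  exists2 u : R, u \is a GRing.unit & a = u * b.

Definition is_UFD (R : idomainType) : Prop :=
  (forall a : R, a != 0 -> a \isn't a GRing.unit ->
     exists2 s : seq R, (forall x, x \in s -> ufd_irreducible x)
                        & a = \prod_(x <- s) x)
  /\
  (forall s t : seq R,
     (forall x, x \in s -> ufd_irreducible x) ->
     (forall x, x \in t -> ufd_irreducible x) ->
     \prod_(x <- s) x = \prod_(x <- t) x ->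
     exists2 t' : seq R, perm_eq t t' &
       size s = size t' /\
       forall i, (i < size s)%N -> associated (nth 0 s i) (nth 0 t' i)).

(* Subrings A[x_i^{+-1} : i in T] of a field F, generated by the image   *)
(* of a coefficient ring A (via c) and the elements x_i, x_i^{-1}, i\in T. *)

Inductive laurent_ring (A : nzRingType) (F : fieldType) (I : Type)
    (c : A -> F) (x : I -> F) (T : I -> Prop) : F -> Prop :=
| lr_const a : laurent_ring c x T (c a)
| lr_var i : T i -> laurent_ring c x T (x i)
| lr_inv i : T i -> laurent_ring c x T ((x i)^-1)
| lr_add a b : laurent_ring c x T a -> laurent_ring c x T b ->
               laurent_ring c x T (a + b)
| lr_opp a : laurent_ring c x T a -> laurent_ring c x T (- a)
| lr_mul a b : laurent_ring c x T a -> laurent_ring c x T b ->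
               laurent_ring c x T (a * b).

Section SubringNotions.
Variable (F : fieldType) (S : F -> Prop).

Definition sunit (a : F) : Prop := S a /\ exists2 b, S b & a * b = 1.

Definition sdvd (a b : F) : Prop := exists2 c, S c & b = a * c.

(* irreducible element of S; units count as irreducible *)
Definition sirreducible (a : F) : Prop :=
  [/\ S a, a != 0 &
      forall b c, S b -> S c -> a = b * c -> sunit b \/ sunit c].

Definition scoprime (a b : F) : Prop :=
  forall d, S d -> sdvd d a -> sdvd d b -> sunit d.
End SubringNotions.

Definition alg_indep (K F : fieldType) (kappa : {rmorphism K -> F})
    (I : eqType) (x : I -> F) (T : I -> Prop) : Prop :=
  forall (n : nat) (idx : 'I_n -> I), injective idx -> (forall j, T (idx j)) ->
  forall p : {mpoly K[n]}, p != 0 -> mmap kappa (fun j => x (idx j)) p != 0.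

(* Laurent polynomials over R in N variables, represented as pairs      *)
(* (P, d) standing for P(Y) * Y^(-d).                                    *)

Definition lpoly (R : idomainType) (N : nat) := ({mpoly R[N]} * 'X_{1..N})%type.

Definition leval (R : idomainType) (S : fieldType) (N : nat)
    (c : R -> S) (y : 'I_N -> S) (P : lpoly R N) : S :=
  mmap c y P.1 / mmap1 y P.2.

Definition ratfun (R : idomainType) (N : nat) := {fraction {mpoly R[N]}}.

Definition rcst (R : idomainType) (N : nat) (r : R) : ratfun R N :=
  FracField.tofrac (r%:MP_[N]).

Definition rvar (R : idomainType) (N : nat) (i : 'I_N) : ratfun R N :=
  FracField.tofrac ('X_i : {mpoly R[N]}).

Definition LaurentR (R : idomainType) (N : nat) (T : 'I_N -> Prop) :
  ratfun R N -> Prop := laurent_ring (@rcst R N) (@rvar R N) T.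

Definition lelem (R : idomainType) (N : nat) (P : lpoly R N) : ratfun R N :=
  leval (@rcst R N) (@rvar R N) P.

Definition is_laurent_monomial (R : idomainType) (N : nat) (P : lpoly R N) :=
  exists (a : R) (m : 'I_N -> int),
    lelem P = @rcst R N a * \prod_(i < N) @rvar R N i ^ m i.

Definition depends_on_all (R : idomainType) (N : nat) (P : lpoly R N) :=
  forall i : 'I_N, ~ LaurentR (fun j => j != i) (lelem P).

Section Lattice.
Variables (L : zmodType) (N : nat) (v : 'I_N -> L).

Definition generates : Prop :=
  forall x : L, exists c : 'I_N -> int, x = \sum_(i < N) v i *~ c i.

Definition nonneg_indep : Prop :=
  forall a : 'I_N -> nat, \sum_(i < N) v i *+ a i = 0 -> forall i, a i = 0%N.

Definition inS (x : L) : Prop := exists a : 'I_N -> nat, x = \sum_(i < N) v i *+ a i.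

Definition lle (h1 h2 : L) : Prop := inS (h1 - h2).

Definition light_cone_regular (H : L -> Prop) : Prop :=
  [/\ exists h, H h,
      forall h, H h -> exists s : seq L, forall h', H h' -> lle h' h -> h' \in s
    & forall h, H h -> forall h', lle h h' -> H h'].

Definition init_boundary (H : L -> Prop) (h : L) : Prop :=
  H h /\ exists i : 'I_N, ~ H (h + v i).
End Lattice.

(* Given kappa : K = Frac(R) -> F and values f : L -> F, the rings       *)
(* R_T = R[f_h^{+-1} : h in T] and K_T = K[f_h^{+-1} : h in T] inside F. *)
Definition ringR (R : idomainType) (F : fieldType)
    (kappa : {rmorphism {fraction R} -> F}) (L : Type) (f : L -> F)
    (T : L -> Prop) : F -> Prop :=
  laurent_ring (fun r : R => kappa (FracField.tofrac r)) f T.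

Definition ringK (R : idomainType) (F : fieldType)
    (kappa : {rmorphism {fraction R} -> F}) (L : Type) (f : L -> F)
    (T : L -> Prop) : F -> Prop :=
  laurent_ring kappa f T.

(* Main.v *)
Require Import Defs.
From HB Require Import structures.
From mathcomp Require Import all_boot all_order all_algebra.
From mathcomp Require Import fraction.
From mathcomp Require Import mpoly.
From mathcomp Require Import ring.
From Stdlib Require Import Classical ClassicalEpsilon.

Import Order.TTheory GRing.Theory Num.Theory.
Local Open Scope ring_scope.

Section UFD.
Variable (R : idomainType) (hR : is_UFD R).

Lemma ufd_fact (m : R) : m != 0 ->
  exists u (s : seq R), [/\ u \is a GRing.unit,
    (forall x, x \in s -> ufd_irreducible x) & m = u * \prod_(x <- s) x].
Proof.
move=> m0; case: (boolP (m \is a GRing.unit)) => mu.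
  by exists m, [::]; split => //; rewrite big_nil mulr1.
have [s hs ->] := hR.1 m m0 mu.
by exists 1, s; split => //; rewrite ?unitr1 ?mul1r.
Qed.

Lemma ufd_irr_unit (p c : R) : ufd_irreducible p -> c \is a GRing.unit ->
  ufd_irreducible (p * c).
Proof.
move=> [p0 pnu pirr] cu; split.
- by rewrite mulf_neq0 //; apply: contraTneq cu => ->; rewrite unitr0.
- by rewrite unitrMl.
- move=> b d hbd.
  have : p = b * (d * c^-1) by rewrite mulrA -hbd mulrK.
  move/pirr => [->|]; first by left.
  by rewrite unitrMl ?unitrV // => ->; right.
Qed.

Lemma ufd_prime (p : R) : ufd_irreducible p -> forall a b c,
  a * b = p * c -> (exists a', a = p * a') \/ (exists b', b = p * b').
Proof.
move=> hp a b c habc.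
have [p0 pnu pirr] := hp.
have [-> | a0] := eqVneq a 0; first by left; exists 0; rewrite mulr0.
have [-> | b0] := eqVneq b 0; first by right; exists 0; rewrite mulr0.
case: (boolP (a \is a GRing.unit)) => au.
  by right; exists (a^-1 * c); rewrite mulrCA -habc mulKr.
case: (boolP (b \is a GRing.unit)) => bu.
  by left; exists (c * b^-1); rewrite mulrA -habc mulrK.
have c0 : c != 0.
  apply/eqP => c0; move: habc; rewrite c0 mulr0 => /eqP.
  by rewrite mulf_eq0 (negbTE a0) (negbTE b0).
have [q [s' [hq hs' hpc [w hw]]]] : exists q s',
   [/\ ufd_irreducible q, (forall x, x \in s' -> ufd_irreducible x),
       p * c = q * \prod_(x <- s') x & exists w, q = p * w].
  case: (boolP (c \is a GRing.unit)) => cu.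
    exists (p * c), [::]; split => //; first exact: ufd_irr_unit.
      by rewrite big_nil mulr1.
    by exists c.
  have [sc hsc ->] := hR.1 c c0 cu.
  by exists p, sc; split => //; exists 1; rewrite mulr1.
have [sa hsa ea] := hR.1 a a0 au.
have [sb hsb eb] := hR.1 b b0 bu.
have hS : forall x, x \in q :: s' -> ufd_irreducible x.
  by move=> x; rewrite inE => /orP [/eqP ->|]; [exact: hq| exact: hs'].
have hT : forall x, x \in sa ++ sb -> ufd_irreducible x.
  by move=> x; rewrite mem_cat => /orP [/hsa|/hsb].
have hprod : \prod_(x <- q :: s') x = \prod_(x <- sa ++ sb) x.
  by rewrite big_cons -hpc -habc big_cat /= -ea -eb.
have [t' ht' [hsz hass]] := hR.2 _ _ hS hT hprod.
have : associated (nth 0 (q :: s') 0) (nth 0 t' 0) by apply: hass.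
rewrite /= => -[u uu hu].
have xin : nth 0 t' 0 \in sa ++ sb.
  by rewrite (perm_mem ht') mem_nth // -hsz.
set x := nth 0 t' 0 in hu xin.
have hx : x = p * (u^-1 * w) by rewrite mulrCA -hw hu mulKr.
rewrite mem_cat in xin; case/orP: xin => xin.
  left; exists (u^-1 * w * \prod_(y <- rem x sa) y).
  by rewrite ea (big_rem _ xin) /= hx !mulrA.
right; exists (u^-1 * w * \prod_(y <- rem x sb) y).
by rewrite eb (big_rem _ xin) /= hx !mulrA.
Qed.
End UFD.

Lemma decb (P : Prop) : {b : bool | b <-> P}.
Proof.
apply: constructive_indefinite_description.
case: (classic P) => hP; first by exists true.
by exists false; split.
Qed.

Section Core.
Variables (R : idomainType) (p : R) (n : nat).
Hypothesis hprime : forall a b c, a * b = p * c ->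
  (exists a', a = p * a') \/ (exists b', b = p * b').

Definition pdvd (a : R) := exists c, a = p * c.
Definition pb (a : R) : bool := proj1_sig (decb (pdvd a)).
Lemma pbP a : pb a <-> pdvd a.
Proof. exact: (proj2_sig (decb (pdvd a))). Qed.

Definition DD (Q : {mpoly R[n]}) := exists Q', Q = p%:MP * Q'.

Lemma DD_coef Q : DD Q -> forall m, pdvd Q@_m.
Proof. by move=> [Q' ->] m; rewrite mcoeffCM; exists Q'@_m. Qed.

Lemma DD_sum (l : seq 'X_{1..n}) (P : pred 'X_{1..n}) g :
  (forall m, m \in l -> P m -> pdvd (g m)) ->
  DD (\sum_(m <- l | P m) g m *: 'X_[m]).
Proof.
elim: l => [|m l IH] hl.
  by rewrite big_nil; exists 0; rewrite mulr0.
rewrite big_cons.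
have [Q' hQ'] : DD (\sum_(m <- l | P m) g m *: 'X_[m]).
  by apply: IH => m' hm'; apply: hl; rewrite inE hm' orbT.
case: (boolP (P m)) => Pm; last by exists Q'.
have [c hc] := hl m (mem_head _ _) Pm.
exists (c *: 'X_[m] + Q'); rewrite mulrDr -hQ' hc.
by rewrite mul_mpolyC scalerA.
Qed.

Lemma coef_DD Q : (forall m, pdvd Q@_m) -> DD Q.
Proof.
by move=> h; rewrite (mpolyE Q); apply: (@DD_sum _ predT) => m _ _; apply: h.
Qed.

Lemma DD_mul Q S : DD Q -> DD (Q * S).
Proof. by move=> [Q' ->]; exists (Q' * S); rewrite mulrA. Qed.

Lemma DD_sub Q S : DD Q -> DD S -> DD (Q - S).
Proof. by move=> [Q' ->] [S' ->]; exists (Q' - S'); rewrite mulrBr. Qed.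

Lemma DD_MX Q m : DD (Q * 'X_[m]) -> DD Q.
Proof.
move=> h; apply: coef_DD => k.
by rewrite -(mcoeffMX Q m k); apply: DD_coef.
Qed.

Lemma coef_sum (l : seq 'X_{1..n}) (P : pred 'X_{1..n}) g k : uniq l ->
  (\sum_(m <- l | P m) g m *: 'X_[m] : {mpoly R[n]})@_k =
    if (k \in l) && P k then g k else 0.
Proof.
elim: l => [|m l IH] /=; first by rewrite big_nil mcoeff0.
rewrite big_cons inE.
have [<- | mk] := eqVneq k m; move=> /andP [ml ul].
  rewrite /=; case: (P k).
    by rewrite mcoeffD mcoeffZ mcoeffX eqxx mulr1 IH // (negbTE ml) addr0.
  by rewrite IH // (negbTE ml).
rewrite /=; case: (P m) => //; last by rewrite IH.
by rewrite mcoeffD mcoeffZ mcoeffX eq_sym (negbTE mk) mulr0 add0r IH.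
Qed.

Lemma split_DD X : ~ DD X -> exists X1 X2, [/\ X = X1 + X2, DD X1, X2 != 0 &
  forall k, X2@_k != 0 -> ~ pdvd X2@_k].
Proof.
move=> nX.
set X1 := \sum_(m <- msupp X | pb X@_m) X@_m *: 'X_[m].
set X2 := \sum_(m <- msupp X | ~~ pb X@_m) X@_m *: 'X_[m].
have eX : X = X1 + X2 by rewrite {1}(mpolyE X) (bigID (fun m => pb X@_m)).
have D1 : DD X1 by apply: DD_sum => m _ /pbP.
exists X1, X2; split => //.
  apply/eqP => X20; apply: nX; by rewrite eX X20 addr0.
move=> k; rewrite /X2 coef_sum ?msupp_uniq //.
case: ifP => [/andP [_ nk] _ /pbP hk|]; last by rewrite eqxx.
by rewrite hk in nk.
Qed.

Lemma core X Y : DD (X * Y) -> DD X \/ DD Y.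
Proof.
move=> hXY.
case: (classic (DD X)) => hX; first by left.
case: (classic (DD Y)) => hY; first by right.
exfalso.
have [X1 [X2 [eX D1 X20 nX2]]] := @split_DD X hX.
have [Y1 [Y2 [eY E1 Y20 nY2]]] := @split_DD Y hY.
have D2 : DD (X2 * Y2).
  have -> : X2 * Y2 = X * Y - X1 * Y - X2 * Y1.
    by rewrite eX eY; ring.
  by apply: DD_sub; [apply: DD_sub => //; apply: DD_mul|
    rewrite mulrC; apply: DD_mul].
have := @DD_coef _ D2 (mlead X2 + mlead Y2).
rewrite mleadcM => -[c hc].
case: (hprime _ _ _ hc) => -[a' ha'].
  by apply: (nX2 (mlead X2)); [rewrite mleadc_eq0 | exists a'].
by apply: (nY2 (mlead Y2)); [rewrite mleadc_eq0 | exists a'].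
Qed.
End Core.


Lemma frac_decomp (R : idomainType) (k : {fraction R}) :
  exists a b : R, b != 0 /\ k * FracField.tofrac b = FracField.tofrac a.
Proof.
elim/quotW: k => x.
exists (x.1), (x.2); split; first exact: denom_ratioP.
rewrite -[_ * _]/(FracField.mul _ _).
unlock FracField.tofrac.
rewrite !piE /FracField.mulf /=.
apply/eqmodP; rewrite /= FracField.equivfE !numden_Ratio ?mulf_neq0 ?oner_eq0 ?denom_ratioP //.
by rewrite !mulr1 mulrC.
Qed.

Lemma lr_mono (A : nzRingType) (F : fieldType) (I : Type) (c : A -> F) (x : I -> F)
  (T T' : I -> Prop) a : laurent_ring c x T a -> (forall i, T i -> T' i) ->
  laurent_ring c x T' a.
Proof.
move=> h hT; elim: h => *; by [apply: lr_const | apply: lr_var; auto |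
  apply: lr_inv; auto | apply: lr_add | apply: lr_opp | apply: lr_mul].
Qed.

Arguments lr_mono {A F I c x T T' a}.

Section Main.
Variables (R : idomainType) (F : fieldType) (kappa : {rmorphism {fraction R} -> F}).
Variables (L : zmodType) (f : L -> F) (T : L -> Prop).
Hypothesis hindep : alg_indep kappa f T.

Local Notation cr r := (kappa (FracField.tofrac r)).
Local Notation cRm := (kappa \o (@FracField.tofrac R))%FUN.
Local Notation A := (ringR kappa f T).
Local Notation B := (ringK kappa f T).

Lemma A_c r : A (cr r). Proof. exact: (lr_const _ _ _ r). Qed.
Lemma A_add a b : A a -> A b -> A (a + b). Proof. exact: lr_add. Qed.
Lemma A_mul a b : A a -> A b -> A (a * b). Proof. exact: lr_mul. Qed.
Lemma A_opp a : A a -> A (- a). Proof. exact: lr_opp. Qed.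
Lemma A_0 : A 0. Proof. by have := A_c 0; rewrite tofrac0 rmorph0. Qed.
Lemma A_1 : A 1. Proof. by have := A_c 1; rewrite tofrac1 rmorph1. Qed.
Lemma A_exp a k : A a -> A (a ^+ k).
Proof. move=> ha; elim: k => [|k IH]; first by rewrite expr0; exact: A_1.
by rewrite exprS; apply: A_mul. Qed.
Lemma A_prod (I : Type) (l : seq I) (P : pred I) (g : I -> F) :
  (forall i, P i -> A (g i)) -> A (\prod_(i <- l | P i) g i).
Proof. move=> h; apply: big_ind => //; [exact: A_1|exact: A_mul]. Qed.
Lemma A_sum (I : Type) (l : seq I) (P : pred I) (g : I -> F) :
  (forall i, P i -> A (g i)) -> A (\sum_(i <- l | P i) g i).
Proof. move=> h; apply: big_ind => //; [exact: A_0|exact: A_add]. Qed.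

Lemma A_B a : A a -> B a.
Proof.
elim=> *; by [apply: (lr_const _ _ _ (FracField.tofrac _)) | apply: lr_var |
  apply: lr_inv | apply: lr_add | apply: lr_opp | apply: lr_mul].
Qed.

Lemma cr_eq0 r : (cr r == 0) = (r == 0).
Proof. by rewrite fmorph_eq0 tofrac_eq0. Qed.

Lemma B_clear x : B x -> exists r, r != 0 /\ A (cr r * x).
Proof.
elim=> {x}.
- move=> k; have [a [b [b0 hk]]] := @frac_decomp R k.
  exists b; split => //; rewrite mulrC -rmorphM hk; exact: A_c.
- by move=> i hi; exists 1; rewrite oner_eq0 tofrac1 rmorph1 mul1r; split => //; apply: lr_var.
- by move=> i hi; exists 1; rewrite oner_eq0 tofrac1 rmorph1 mul1r; split => //; apply: lr_inv.
- move=> a b _ [r1 [r10 h1]] _ [r2 [r20 h2]]; exists (r1 * r2); split.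
    by rewrite mulf_neq0.
  have -> : cr (r1 * r2) * (a + b) = cr r2 * (cr r1 * a) + cr r1 * (cr r2 * b).
    by rewrite !rmorphM /=; ring.
  by apply: A_add; apply: A_mul => //; apply: A_c.
- by move=> a _ [r [r0 h]]; exists r; split => //; rewrite mulrN; apply: A_opp.
- move=> a b _ [r1 [r10 h1]] _ [r2 [r20 h2]]; exists (r1 * r2); split.
    by rewrite mulf_neq0.
  have -> : cr (r1 * r2) * (a * b) = (cr r1 * a) * (cr r2 * b).
    by rewrite !rmorphM /=; ring.
  exact: A_mul.
Qed.

Lemma A_unit u : u \is a GRing.unit -> sunit A (cr u).
Proof.
move=> uu; split; first exact: A_c.
exists (cr u^-1); first exact: A_c.
by rewrite -rmorphM -tofracM mulrV // tofrac1 rmorph1.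
Qed.

Lemma unitB k g : k != 0 -> sunit A g -> sunit B (kappa k * g).
Proof.
move=> k0 [Ag [g' Ag' hg]]; split.
  by apply: lr_mul; [apply: lr_const | apply: A_B].
exists (kappa k^-1 * g'); first by apply: lr_mul; [apply: lr_const | apply: A_B].
by rewrite mulrACA hg mulr1 -rmorphM mulfV // rmorph1.
Qed.

Lemma unit_transfer r m b g : r != 0 -> b != 0 -> cr r * b = cr m * g ->
  sunit A g -> sunit B b.
Proof.
move=> r0 b0 e ug.
have m0 : m != 0.
  apply: contraNneq b0 => m0; move/eqP: e; rewrite m0 tofrac0 rmorph0 mul0r.
  by rewrite mulf_eq0 cr_eq0 (negbTE r0).
have -> : b = kappa (FracField.tofrac m / FracField.tofrac r) * g.
  rewrite fmorph_div /= mulrAC -e mulrAC mulfV ?mul1r //.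
  by rewrite cr_eq0.
apply: unitB => //; by rewrite mulf_neq0 ?invr_eq0 ?tofrac_eq0.
Qed.

Lemma A_in_s a : A a -> exists s : seq L,
  (forall h, h \in s -> T h) /\ laurent_ring (fun r : R => cr r) f (fun h => h \in s) a.
Proof.
elim=> {a}.
- by move=> r; exists [::]; split => //; apply: lr_const.
- by move=> i hi; exists [:: i]; split; [move=> h; rewrite inE => /eqP ->|apply: lr_var; rewrite inE].
- by move=> i hi; exists [:: i]; split; [move=> h; rewrite inE => /eqP ->|apply: lr_inv; rewrite inE].
- move=> a b _ [s1 [h1 l1]] _ [s2 [h2 l2]]; exists (s1 ++ s2); split.
    by move=> h; rewrite mem_cat => /orP [/h1|/h2].
  by apply: lr_add; [apply: (lr_mono l1) | apply: (lr_mono l2)] => i hi;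
    rewrite mem_cat hi ?orbT.
- by move=> a _ [s [h l]]; exists s; split => //; apply: lr_opp.
- move=> a b _ [s1 [h1 l1]] _ [s2 [h2 l2]]; exists (s1 ++ s2); split.
    by move=> h; rewrite mem_cat => /orP [/h1|/h2].
  by apply: lr_mul; [apply: (lr_mono l1) | apply: (lr_mono l2)] => i hi;
    rewrite mem_cat hi ?orbT.
Qed.


Section Rep.
Variable s : seq L.
Hypothesis us : uniq s.
Hypothesis sT : forall h, h \in s -> T h.

Definition yv : 'I_(size s) -> F := fun j => f (nth 0 s j).
Local Notation ev P := (mmap cRm yv P).

Lemma idx_inj : injective (fun j : 'I_(size s) => nth 0 s j).
Proof. by move=> i j /eqP; rewrite nth_uniq // => /eqP /val_inj. Qed.

Lemma ev_inj (P : {mpoly R[size s]}) : ev P = 0 -> P = 0.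
Proof.
move=> e; apply/eqP; apply: contraT => P0.
have tinj : injective (@FracField.tofrac R).
  by move=> a b /eqP; rewrite tofrac_eq => /eqP.
have hm : map_mpoly (@FracField.tofrac R) P != 0.
  apply: contra P0 => /eqP h; apply/eqP/mpolyP => m.
  have := congr1 (mcoeff m) h; rewrite mcoeff_map_mpoly !mcoeff0.
  by rewrite -(tofrac0 R) => /tinj.
have := hindep _ _ idx_inj (fun j => sT _ (mem_nth 0 (ltn_ord j))) _ hm.
suff -> : mmap kappa (fun j => f (nth 0 s j)) (map_mpoly (@FracField.tofrac R) P) = ev P.
  by rewrite e eqxx.
rewrite /mmap (perm_big _ (msupp_map_mpoly _ tinj)); apply: eq_bigr => m _.
by rewrite mcoeff_map_mpoly.
Qed.

Lemma evX m : ev 'X_[m] = mmap1 yv m.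
Proof. exact: mmapX. Qed.

Lemma yv_neq0 m : mmap1 yv m != 0.
Proof.
rewrite -evX; apply/eqP => /ev_inj /(congr1 (mcoeff m)).
by rewrite mcoeffX eqxx mcoeff0 => /eqP; rewrite oner_eq0.
Qed.

Lemma ev_A P : A (ev P).
Proof.
rewrite /mmap; apply: A_sum => m _; apply: A_mul; first exact: A_c.
apply: A_prod => i _; apply: A_exp; apply: lr_var; apply: sT; exact: mem_nth.
Qed.

Lemma dinv_A m : A (mmap1 yv m)^-1.
Proof.
rewrite /mmap1 -prodfV; apply: A_prod => i _; rewrite -exprVn; apply: A_exp.
apply: lr_inv; apply: sT; exact: mem_nth.
Qed.

Lemma mmap1D m1 m2 : mmap1 yv (m1 + m2) = mmap1 yv m1 * mmap1 yv m2.
Proof. by rewrite commr_mmap1_M // => i x; apply: mulrC. Qed.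

Lemma rep a : laurent_ring (fun r : R => cr r) f (fun h => h \in s) a ->
  exists P m, a = ev P / mmap1 yv m.
Proof.
elim=> {a}.
- by move=> r; exists r%:MP, 0%MM; rewrite mmapC mmap11 divr1.
- move=> h hs; have hj : (index h s < size s)%N by rewrite index_mem.
  exists 'X_[(mnm1 (Ordinal hj))], 0%MM.
  by rewrite mmapX mmap1U mmap11 divr1 /yv /= nth_index.
- move=> h hs; have hj : (index h s < size s)%N by rewrite index_mem.
  exists 1, (mnm1 (Ordinal hj)).
  by rewrite rmorph1 mmap1U /yv /= nth_index ?div1r ?mul1r.
- move=> a b _ [P1 [m1 e1]] _ [P2 [m2 e2]].
  exists (P1 * 'X_[m2] + P2 * 'X_[m1]), (m1 + m2)%MM.
  rewrite rmorphD !rmorphM /= !mmapX mmap1D e1 e2.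
  have := yv_neq0 m1; have := yv_neq0 m2; move=> n2 n1.
  by field; rewrite ?n1 ?n2.
- move=> a _ [P [m e]]; exists (- P), m.
  by rewrite rmorphN /= e mulNr.
- move=> a b _ [P1 [m1 e1]] _ [P2 [m2 e2]].
  exists (P1 * P2), (m1 + m2)%MM.
  rewrite !rmorphM /= mmap1D e1 e2.
  have := yv_neq0 m1; have := yv_neq0 m2; move=> n2 n1.
  by field; rewrite ?n1 ?n2.
Qed.

End Rep.

Section Prime.
Hypothesis hR : is_UFD R.

Lemma A_prime p : ufd_irreducible p -> forall x y z, A x -> A y -> A z ->
  x * y = cr p * z ->
  (exists x', A x' /\ x = cr p * x') \/ (exists y', A y' /\ y = cr p * y').
Proof.
move=> hp x y z Ax Ay Az e.
have [sx [hx lx]] := A_in_s _ Ax.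
have [sy [hy ly]] := A_in_s _ Ay.
have [sz [hz lz]] := A_in_s _ Az.
set s := undup (sx ++ sy ++ sz).
have us : uniq s by apply: undup_uniq.
have sT : forall h, h \in s -> T h.
  by move=> h; rewrite mem_undup !mem_cat => /or3P [/hx|/hy|/hz].
have [X [mx ex]] : exists P m, x = mmap cRm (yv s) P / mmap1 (yv s) m.
  by apply: (@rep s us sT); apply: (lr_mono lx) => h hh;
    rewrite mem_undup !mem_cat hh ?orbT.
have [Y [my ey]] : exists P m, y = mmap cRm (yv s) P / mmap1 (yv s) m.
  by apply: (@rep s us sT); apply: (lr_mono ly) => h hh;
    rewrite mem_undup !mem_cat hh ?orbT.
have [Z [mz ez]] : exists P m, z = mmap cRm (yv s) P / mmap1 (yv s) m.
  by apply: (@rep s us sT); apply: (lr_mono lz) => h hh;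
    rewrite mem_undup !mem_cat hh ?orbT.
have nx := @yv_neq0 s us sT mx.
have ny := @yv_neq0 s us sT my.
have nz := @yv_neq0 s us sT mz.
have e2 : mmap cRm (yv s) X * mmap cRm (yv s) Y * mmap1 (yv s) mz =
    cr p * (mmap cRm (yv s) Z * mmap1 (yv s) mx * mmap1 (yv s) my).
  move: e; rewrite ex ey ez => e.
  transitivity (mmap cRm (yv s) X / mmap1 (yv s) mx *
     (mmap cRm (yv s) Y / mmap1 (yv s) my) *
     (mmap1 (yv s) mx * mmap1 (yv s) my * mmap1 (yv s) mz)).
    by field; rewrite ?nx ?ny ?nz.
  by rewrite e; field; rewrite ?nx ?ny ?nz.
have e3 : X * Y * 'X_[mz] = p%:MP * (Z * 'X_[mx] * 'X_[my]).
  apply/eqP; rewrite -subr_eq0; apply/eqP; apply: (@ev_inj s us sT).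
  by rewrite rmorphB !rmorphM /= !mmapX mmapC /= e2 subrr.
have hpr := @ufd_prime R hR p hp.
have hD : @DD R p _ (X * Y * 'X_[mz]) by exists (Z * 'X_[mx] * 'X_[my]).
case: (@core R p _ hpr X Y (@DD_MX R p _ _ _ hD)) => -[Q hQ].
  left; exists (mmap cRm (yv s) Q / mmap1 (yv s) mx); split.
    by apply: A_mul; [apply: (@ev_A s sT) | apply: (@dinv_A s sT)].
  by rewrite ex hQ rmorphM /= mmapC /= mulrA.
right; exists (mmap cRm (yv s) Q / mmap1 (yv s) my); split.
  by apply: A_mul; [apply: (@ev_A s sT) | apply: (@dinv_A s sT)].
by rewrite ey hQ rmorphM /= mmapC /= mulrA.
Qed.

Lemma crV u : u \is a GRing.unit -> cr u * cr u^-1 = 1.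
Proof. by move=> uu; rewrite -rmorphM -tofracM mulrV // tofrac1 rmorph1. Qed.

Lemma unit_cancel u x : u \is a GRing.unit -> x = cr u * x * cr u^-1.
Proof. by move=> uu; rewrite mulrAC crV // mul1r. Qed.

Lemma peel_list (s : seq R) : (forall q, q \in s -> ufd_irreducible q) ->
  forall u x b1 c1, u \is a GRing.unit -> A x -> A b1 -> A c1 ->
  cr (u * \prod_(q <- s) q) * x = b1 * c1 ->
  exists m1 m2 b2 c2 w, [/\ A b2, A c2, b1 = cr m1 * b2, c1 = cr m2 * c2 &
    w \is a GRing.unit /\ cr w * x = b2 * c2].
Proof.
elim: s => [|p s IH] hs u x b1 c1 uu Ax Ab Ac e.
  exists 1, 1, b1, c1, u; rewrite tofrac1 rmorph1 !mul1r; split => //.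
  by move: e; rewrite big_nil mulr1.
have hp : ufd_irreducible p := hs p (mem_head _ _).
have hs' : forall q, q \in s -> ufd_irreducible q.
  by move=> q hq; apply: hs; rewrite inE hq orbT.
have p0 : cr p != 0 by rewrite cr_eq0; case: hp.
have e' : b1 * c1 = cr p * (cr (u * \prod_(q <- s) q) * x).
  rewrite -e big_cons.
  have -> : u * (p * \prod_(q <- s) q) = p * (u * \prod_(q <- s) q) by rewrite mulrCA.
  by rewrite tofracM rmorphM mulrA.
have Az : A (cr (u * \prod_(q <- s) q) * x) by apply: A_mul => //; apply: A_c.
case: (A_prime _ hp _ _ _ Ab Ac Az e') => -[b' [Ab' hb']].
  have e'' : cr (u * \prod_(q <- s) q) * x = b' * c1.
    by apply: (mulfI p0); rewrite -e' hb' mulrA.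
  have [m1 [m2 [b2 [c2 [w [Ab2 Ac2 hb1 hc1 hw]]]]]] := IH hs' u x b' c1 uu Ax Ab' Ac e''.
  exists (p * m1), m2, b2, c2, w; split => //.
  by rewrite hb' hb1 tofracM rmorphM mulrA.
have e'' : cr (u * \prod_(q <- s) q) * x = b1 * b'.
  by apply: (mulfI p0); rewrite -e' hb' mulrCA.
have [m1 [m2 [b2 [c2 [w [Ab2 Ac2 hb1 hc1 hw]]]]]] := IH hs' u x b1 b' uu Ax Ab Ab' e''.
exists m1, (p * m2), b2, c2, w; split => //.
by rewrite hb' hc1 tofracM rmorphM mulrA.
Qed.

Lemma peel m x b1 c1 : m != 0 -> A x -> A b1 -> A c1 -> cr m * x = b1 * c1 ->
  exists m1 m2 b2 c2 w, [/\ A b2, A c2, b1 = cr m1 * b2, c1 = cr m2 * c2 &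
    w \is a GRing.unit /\ cr w * x = b2 * c2].
Proof.
move=> m0 Ax Ab Ac e.
have [u [s [uu hs em]]] := @ufd_fact R hR m m0.
by apply: (peel_list _ hs _ _ _ _ uu Ax Ab Ac); rewrite -em.
Qed.

Lemma irr_K x : sirreducible A x -> sirreducible B x.
Proof.
move=> [Ax x0 hirr]; split => //; first exact: A_B.
move=> b c Bb Bc e.
have b0 : b != 0 by apply: contraNneq x0 => b0; rewrite e b0 mul0r.
have c0 : c != 0 by apply: contraNneq x0 => c0; rewrite e c0 mulr0.
have [r1 [r10 Ab1]] := B_clear _ Bb.
have [r2 [r20 Ac1]] := B_clear _ Bc.
have e1 : cr (r1 * r2) * x = (cr r1 * b) * (cr r2 * c).
  by rewrite e tofracM rmorphM; ring.
have [m1 [m2 [b2 [c2 [w [Ab2 Ac2 hb hc [wu hw]]]]]]] :=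
  peel _ _ _ _ (mulf_neq0 r10 r20) Ax Ab1 Ac1 e1.
have ex : x = b2 * (c2 * cr w^-1).
  by rewrite {1}(unit_cancel _ x wu) hw mulrA.
case: (hirr _ _ Ab2 (A_mul _ _ Ac2 (A_c _)) ex) => hu.
  by left; apply: (unit_transfer _ _ _ _ r10 b0 hb hu).
right; apply: (unit_transfer _ (m2 * w) _ _ r20 c0 _ hu) => //.
by rewrite hc tofracM rmorphM mulrACA crV // mulr1.
Qed.

Lemma cop_K x1 x2 : A x1 -> A x2 -> x1 != 0 -> scoprime A x1 x2 ->
  scoprime B x1 x2.
Proof.
move=> Ax1 Ax2 x10 hcop d Bd [e1 Be1 he1] [e2 Be2 he2].
have d0 : d != 0 by apply: contraNneq x10 => d0; rewrite he1 d0 mul0r.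
have [r [r0 Ad]] := B_clear _ Bd.
have [s1 [s10 Ae1]] := B_clear _ Be1.
have [s2 [s20 Ae2]] := B_clear _ Be2.
have E1 : cr (r * s1) * x1 = (cr r * d) * (cr s1 * e1).
  by rewrite he1 tofracM rmorphM; ring.
have E2 : cr (r * s2) * x2 = (cr r * d) * (cr s2 * e2).
  by rewrite he2 tofracM rmorphM; ring.
have [m1 [k1 [d1 [f1 [w1 [Ad1 Af1 hd1 _ [w1u hw1]]]]]]] :=
  peel _ _ _ _ (mulf_neq0 r0 s10) Ax1 Ad Ae1 E1.
have [n1 [k2 [d2 [f2 [w2 [Ad2 Af2 hd2 _ [w2u hw2]]]]]]] :=
  peel _ _ _ _ (mulf_neq0 r0 s20) Ax2 Ad Ae2 E2.
have n10 : n1 != 0.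
  apply: contraNneq d0 => n10; move/eqP: hd2; rewrite n10 tofrac0 rmorph0 mul0r.
  by rewrite mulf_eq0 cr_eq0 (negbTE r0).
have E3 : cr n1 * d2 = d1 * cr m1 by rewrite -hd2 hd1 mulrC.
have [a1 [a2 [g [c2 [w [Ag Ac2 hg1 hc2 [wu hw]]]]]]] :=
  peel _ _ _ _ n10 Ad2 Ad1 (A_c m1) E3.
have dv1 : Defs.sdvd A g x1.
  exists (cr a1 * (f1 * cr w1^-1)).
    by apply: A_mul; [apply: A_c | apply: A_mul => //; apply: A_c].
  by rewrite {1}(unit_cancel _ x1 w1u) hw1 hg1; ring.
have dv2 : Defs.sdvd A g x2.
  exists (c2 * cr w^-1 * f2 * cr w2^-1).
    by repeat apply: A_mul => //; apply: A_c.
  by rewrite {1}(unit_cancel _ x2 w2u) hw2 {1}(unit_cancel _ d2 wu) hw; ring.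
have ug := hcop g Ag dv1 dv2.
apply: (unit_transfer _ (m1 * a1) _ _ r0 d0 _ ug).
by rewrite hd1 hg1 tofracM rmorphM mulrA.
Qed.

End Prime.

End Main.

Theorem lemma3p4
  (* R a UFD, K = {fraction R} *)
  (R : idomainType) (hR : is_UFD R)
  (* L a Z-module generated by distinct v_1..v_N (N = n.+1), v_N = v ord_max *)
  (L : zmodType) (n : nat) (v : 'I_n.+1 -> L)
  (hv_inj : injective v) (hv_gen : generates v) (hv_ind : nonneg_indep v)
  (* Phi: irreducible Laurent polynomial, not a monomial, depending on all variables *)
  (Phi : lpoly R n.+1)
  (hPhi_irr : sirreducible (LaurentR (fun _ => True)) (lelem Phi))
  (hPhi_nm : ~ is_laurent_monomial Phi)
  (hPhi_dep : depends_on_all Phi)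
  (* v_N is the minimum of {0, v_1, ..., v_N} *)
  (hmin : lle v (v ord_max) 0 /\ forall i, lle v (v ord_max) (v i))
  (* the equation can be solved for Y_N by an irreducible Laurent polynomial Psi:
     Y_N = Psi(Y_1, ..., Y_{N-1}, Phi(Y_1, ..., Y_N)) *)
  (Psi : lpoly R n.+1)
  (hPsi_irr : sirreducible (LaurentR (fun _ => True)) (lelem Psi))
  (hPsi : leval (@rcst R n.+1)
             (fun i => if i == ord_max then lelem Phi else @rvar R n.+1 i) Psi
          = @rvar R n.+1 ord_max)
  (* H light-cone regular *)
  (H : L -> Prop) (hH : light_cone_regular v H)
  (* the f_h live in a field F containing K, f_{h0} (h0 in H0) algebraically
     independent over K, and f_h (h in H \ H0) given by the recursion *)
  (F : fieldType) (kappa : {rmorphism {fraction R} -> F}) (f : L -> F)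
  (hindep : alg_indep kappa f (init_boundary v H))
  (hrec : forall h, H h -> ~ init_boundary v H h ->
            f h = leval (fun r : R => kappa (FracField.tofrac r))
                        (fun i => f (h + v i)) Phi)
  (* Laurent property, irreducibility and coprimeness over R *)
  (hLaurent : forall h, H h -> ringR kappa f (init_boundary v H) (f h))
  (hirr : forall h, H h -> sirreducible (ringR kappa f (init_boundary v H)) (f h))
  (hcop : forall h1 h2, H h1 -> H h2 -> h1 <> h2 ->
            scoprime (ringR kappa f (init_boundary v H)) (f h1) (f h2)) :
  (* the same three properties over K *)
  [/\ (forall h, H h -> ringK kappa f (init_boundary v H) (f h)),
      (forall h, H h -> ~ init_boundary v H h ->
         sirreducible (ringK kappa f (init_boundary v H)) (f h))
    & (forall h1 h2, H h1 -> H h2 -> h1 <> h2 ->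
         scoprime (ringK kappa f (init_boundary v H)) (f h1) (f h2))].
Proof.
split.
- by move=> h Hh; apply: A_B; apply: hLaurent.
- move=> h Hh _; apply: (irr_K _ _ _ _ _ _ hindep hR); exact: hirr.
- move=> h1 h2 H1 H2 ne.
  apply: (cop_K _ _ _ _ _ _ hindep hR); [exact: hLaurent | exact: hLaurent | | exact: hcop].
  by case: (hirr h1 H1).
Qed.
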